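(* Let $\bm\theta = (\theta^1,\dots,\theta^k) \in (0,1)^k$ with a unique best treatment $d^* = \arg\max_d \theta^d$. Then \[ \Gamma^*(\bm\theta) \ge \frac{1}{4 H(\bm\theta)}, \qquad \text{where } H(\bm\theta) = \sum_{d \ne d^*} \frac{1}{(\theta^{d^*} - \theta^d)^2}. \]
   Context: Let $d_{\mathrm{KL}}(p,q) = p\log(p/q) + (1-p)\log((1-p)/(1-q))$ be the KL divergence between Bernoulli distributions with means $p$ and $q$. For allocation shares $\bm\rho = (\rho^1,\dots,\rho^k)$ and $j \neq d^*$ define $G_j(\rho^{d^*},\rho^j) = \min_{x \in [\theta^j, \theta^{d^*}]} \rho^{d^*} d_{\mathrm{KL}}(x,\theta^{d^*}) + \rho^j d_{\mathrm{KL}}(x,\theta^j)$. Then $\Gamma^*(\bm\theta)$ is the optimal value of the problem: maximize $\Gamma$ over $\Gamma$ and $\bm\rho$ subject to $G_j(\rho^{d^*},\rho^j) - \Gamma \ge 0$ for all $j \ne d^*$, $\sum_{i=1}^k \rho^i = 1$, $\rho^{d^*} = 1/2$, and $\rho^j \ge 0$ for all $j$. *)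

(* Defs.v *)
From HB Require Import structures.
From mathcomp Require Import all_boot all_order all_algebra.
From mathcomp Require Import all_classical all_reals all_analysis.
Set Implicit Arguments. Unset Strict Implicit. Unset Printing Implicit Defensive.
Import Order.TTheory GRing.Theory Num.Theory.
Local Open Scope classical_set_scope.
Local Open Scope ring_scope.

Definition dKL (R : realType) (p q : R) : R :=
  p * ln (p / q) + (1 - p) * ln ((1 - p) / (1 - q)).

(* G_j(rho^{d*}, rho^j) = min over x in [theta^j, theta^{d*}] of
   rho^{d*} d_KL(x, theta^{d*}) + rho^j d_KL(x, theta^j)
   (the minimum is attained by continuity, so it is the infimum). *)
Definition Gfun (R : realType) (thstar thj rhostar rhoj : R) : R :=
  inf [set rhostar * dKL x thstar + rhoj * dKL x thj | x in [set x : R | thj <= x <= thstar]].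

Definition Gamma_star (R : realType) (k : nat) (theta : 'I_k -> R) (dstar : 'I_k) : R :=
  sup [set g : R | exists rho : 'I_k -> R,
        [/\ (forall j, j != dstar -> 0 <= Gfun (theta dstar) (theta j) (rho dstar) (rho j) - g),
            \sum_(i < k) rho i = 1,
            rho dstar = 1 / 2 &
            (forall j, 0 <= rho j)]].

Definition Hcomp (R : realType) (k : nat) (theta : 'I_k -> R) (dstar : 'I_k) : R :=
  \sum_(d < k | d != dstar) 1 / (theta dstar - theta d) ^+ 2.

(* Main.v *)
Require Import Defs.
From HB Require Import structures.
From mathcomp Require Import all_boot all_order all_algebra.
From mathcomp Require Import all_classical all_reals all_analysis.
Import Order.TTheory GRing.Theory Num.Theory.
Local Open Scope ring_scope.
From mathcomp Require Import lra ring.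

Section S.
Variable R : realType.

Lemma ln_le_sub1 {x : R} : 0 < x -> ln x <= x - 1.
Proof.
move=> x0; have := expR_ge1Dx (ln x); rewrite lnK ?posrE //; lra.
Qed.

Lemma key_half {p q : R} : 0 < p -> 0 < q ->
  2 * p - 2 * (Num.sqrt p * Num.sqrt q) <= p * ln (p / q).
Proof.
move=> p0 q0.
set a := Num.sqrt p; set b := Num.sqrt q.
have a0 : 0 < a by rewrite sqrtr_gt0.
have b0 : 0 < b by rewrite sqrtr_gt0.
have pa : p = a ^+ 2 by rewrite sqr_sqrtr // ltW.
have qb : q = b ^+ 2 by rewrite sqr_sqrtr // ltW.
have -> : p / q = ((b / a) ^-1) ^+ 2 by rewrite invf_div expr_div_n -pa -qb.
have ba : 0 < b / a by rewrite divr_gt0.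
rewrite lnXn ?invr_gt0 // lnV ?posrE //.
have := ln_le_sub1 ba.
rewrite pa.
move=> H.
have e : a ^+ 2 * (b * a^-1) = a * b by field; rewrite gt_eqF.
rewrite -mulr_natr.
nra.
Qed.

Lemma poly_part (a b c d : R) : 0 < a -> 0 < b -> 0 < c -> 0 < d ->
  a^+2 + c^+2 = 1 -> b^+2 + d^+2 = 1 ->
  (a^+2 - b^+2)^+2 <= 2 - 2 * (a * b) - 2 * (c * d).
Proof.
move=> a0 b0 c0 d0 e1 e2.
set D := (a^+2 - b^+2)^+2.
set u := a^+2 + b^+2.
set X := (a - b)^+2. set Y := (c - d)^+2.
have eXY : 2 - 2 * (a * b) - 2 * (c * d) = X + Y.
  rewrite /X /Y; transitivity ((a^+2+c^+2) + (b^+2+d^+2) - 2*(a*b) - 2*(c*d)); [by rewrite e1 e2; ring | ring].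
rewrite eXY.
have X0 : 0 <= X by rewrite /X sqr_ge0.
have Y0 : 0 <= Y by rewrite /Y sqr_ge0.
have hX : X * (a + b)^+2 = D by rewrite /X /D; ring.
have hY : Y * (c + d)^+2 = D.
  rewrite /Y /D.
  have -> : a^+2 - b^+2 = d^+2 - c^+2 by lra.
  ring.
have s1 : (a + b)^+2 <= 2 * u by rewrite /u; have := sqr_ge0 (a - b); nra.
have s2 : (c + d)^+2 <= 2 * (2 - u) by rewrite /u; have := sqr_ge0 (c - d); nra.
have u0 : 0 < u by rewrite /u; nra.
have u2 : 0 < 2 - u by rewrite /u; nra.
have hX' : D <= X * (2 * u) by rewrite -hX; apply: ler_wpM2l.
have hY' : D <= Y * (2 * (2 - u)) by rewrite -hY; apply: ler_wpM2l.
have uu : u * (2 - u) <= 1 by have := sqr_ge0 (u - 1); nra.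
have D0 : 0 <= D by rewrite /D sqr_ge0.
have h : 0 <= (u * (2 - u)) * (X + Y - D) by nra.
have p0 : 0 < u * (2 - u) by rewrite mulr_gt0.
rewrite pmulr_rge0 // in h; lra.
Qed.

Lemma dKL_lb (p q : R) : 0 < p < 1 -> 0 < q < 1 -> (p - q)^+2 <= dKL p q.
Proof.
move=> /andP[p0 p1] /andP[q0 q1].
have h1 := key_half p0 q0.
have p1' : 0 < 1 - p by lra.
have q1' : 0 < 1 - q by lra.
have h2 := key_half p1' q1'.
rewrite /dKL.
have ea : Num.sqrt p ^+ 2 = p by rewrite sqr_sqrtr // ltW.
have eb : Num.sqrt q ^+ 2 = q by rewrite sqr_sqrtr // ltW.
have ec : Num.sqrt (1 - p) ^+ 2 = 1 - p by rewrite sqr_sqrtr // ltW.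
have ed : Num.sqrt (1 - q) ^+ 2 = 1 - q by rewrite sqr_sqrtr // ltW.
have := poly_part (Num.sqrt p) (Num.sqrt q) (Num.sqrt (1 - p)) (Num.sqrt (1 - q)).
rewrite !sqrtr_gt0 !(ea, eb, ec, ed) p0 q0 p1' q1'.
move=> /(_ isT isT isT isT) H.
have H' := H (ltac:(lra)) (ltac:(lra)).
lra.
Qed.

Lemma dKL_self (x : R) : 0 < x < 1 -> dKL x x = 0.
Proof.
move=> /andP[x0 x1]; rewrite /dKL !divff ?ln1 ?mulr0 ?addr0 //; [lra | exact: lt0r_neq0].
Qed.

Lemma Gfun_lb (ts tj rs rj g : R) : tj <= ts ->
  (forall x, tj <= x <= ts -> g <= rs * dKL x ts + rj * dKL x tj) ->
  g <= Gfun ts tj rs rj.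
Proof.
move=> hle H; rewrite /Gfun; apply: lb_le_inf.
  by exists (rs * dKL tj ts + rj * dKL tj tj); exists tj => //=; rewrite lexx hle.
by move=> y [x hx <-]; apply: H.
Qed.

Lemma Gfun_ub (ts tj rs rj : R) : 0 < tj -> ts < 1 -> tj <= ts -> 0 <= rs -> 0 <= rj ->
  Gfun ts tj rs rj <= rs * dKL tj ts.
Proof.
move=> h0 h1 hle hrs hrj; rewrite /Gfun.
have -> : rs * dKL tj ts = rs * dKL tj ts + rj * dKL tj tj.
  by rewrite dKL_self ?mulr0 ?addr0 // h0 /=; lra.
apply: ge_inf; last by exists tj => //=; rewrite lexx hle.
exists 0 => y [x /andP[hx1 hx2] <-].
have a1 : 0 <= dKL x ts.
  apply: le_trans (dKL_lb x ts _ _); try exact: sqr_ge0; apply/andP; split; lra.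
have a2 : 0 <= dKL x tj.
  apply: le_trans (dKL_lb x tj _ _); try exact: sqr_ge0; apply/andP; split; lra.
by apply: addr_ge0; apply: mulr_ge0.
Qed.
End S.

Theorem lemma1 (R : realType) (k : nat) (theta : 'I_k -> R) (dstar : 'I_k) :
  (forall d, 0 < theta d < 1) ->
  (forall d, d != dstar -> theta d < theta dstar) ->
  1 / (4 * Hcomp theta dstar) <= Gamma_star theta dstar.
Proof.
move=> hth hlt.
rewrite /Gamma_star; set S := (X in sup X).
have [[j0 hj0]|nj] := pselect (exists j, j != dstar); last first.
  have H0 : Hcomp theta dstar = 0.
    rewrite /Hcomp big1 // => i hi; exfalso; apply: nj; by exists i.
  rewrite H0 mulr0 invr0 mulr0.
  have -> : S = set0.
    apply/seteqP; split => // g [rho [_ hs hd _]]; exfalso.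
    move: hs; rewrite (bigD1 dstar) //= big1 ?addr0 ?hd; first by lra.
    move=> i hi; exfalso; apply: nj; by exists i.
  by rewrite sup0.
set H := Hcomp theta dstar.
set w := fun j => 1 / (theta dstar - theta j) ^+ 2.
have w0 : forall j, j != dstar -> 0 < w j.
  move=> j hj; rewrite /w divr_gt0 // exprn_gt0 //; have := hlt j hj; lra.
have wH : forall j, j != dstar -> w j <= H.
  move=> j hj; rewrite /H /Hcomp (bigD1 j) //= -/(w j) lerDl.
  by apply: sumr_ge0 => i /andP[hi _]; apply: ltW; apply: w0.
have H0 : 0 < H by apply: lt_le_trans (wH _ hj0); apply: w0.
pose rho := fun i => if i == dstar then 1 / 2 else w i / (2 * H).
have rho_ge0 : forall j, 0 <= rho j.
  move=> j; rewrite /rho; case: ifP => hj; first lra.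
  by apply: ltW; rewrite divr_gt0 ?w0 ?hj // mulr_gt0.
have rho_sum : \sum_(i < k) rho i = 1.
  rewrite (bigD1 dstar) //= /rho eqxx.
  rewrite (eq_bigr (fun i => (2 * H)^-1 * w i)); last first.
    by move=> i /negbTE ->; rewrite mulrC.
  rewrite -mulr_sumr -/(Hcomp theta dstar) -/H.
  field; lra.
have Sg0 : S (1 / (4 * H)).
  exists rho; split => //; last by rewrite /rho eqxx.
  move=> j hj; rewrite subr_ge0 {1}/rho eqxx.
  have hj' := hlt j hj.
  apply: Gfun_lb; first exact: ltW.
  move=> x /andP[hx1 hx2].
  have hx : 0 < x < 1 by apply/andP; have := hth j; have := hth dstar; lra.
  have a1 := @dKL_lb _ x (theta dstar) hx (hth dstar).
  have a2 := @dKL_lb _ x (theta j) hx (hth j).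
  have rj : rho j = w j / (2 * H) by rewrite /rho (negbTE hj).
  have rj2 : rho j <= 1 / 2.
    rewrite rj ler_pdivrMr ?mulr_gt0 //; have := wH j hj; lra.
  have rjD : rho j * (theta dstar - theta j) ^+ 2 = 1 / (2 * H).
    rewrite rj /w; field.
    by rewrite (lt0r_neq0 H0) /= subr_eq0 gt_eqF.
  have q1 : (theta dstar - theta j) ^+ 2 / 2 <= (x - theta dstar) ^+ 2 + (x - theta j) ^+ 2.
    have := sqr_ge0 (2 * x - theta dstar - theta j); nra.
  have rj0 := rho_ge0 j.
  have e4 : 1 / (4 * H) = (1 / (2 * H)) / 2 by field; lra.
  rewrite e4 -rjD.
  have b1 : 1 / 2 * dKL x (theta dstar) >= rho j * (x - theta dstar) ^+ 2.
    have c : 0 <= 1 / 2 - rho j by lra.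
    have := mulr_ge0 c (sqr_ge0 (x - theta dstar)); nra.
  have b2 : rho j * dKL x (theta j) >= rho j * (x - theta j) ^+ 2 by exact: ler_wpM2l.
  have b3 : rho j * ((theta dstar - theta j) ^+ 2 / 2) <= rho j * ((x - theta dstar) ^+ 2 + (x - theta j) ^+ 2).
    exact: ler_wpM2l.
  lra.
apply: ub_le_sup => //.
exists (1 / 2 * dKL (theta j0) (theta dstar)) => g [r [hg _ hd hr]].
have := hg j0 hj0; rewrite hd subr_ge0 => /le_trans; apply.
apply: Gfun_ub; first by case/andP: (hth j0).
- by case/andP: (hth dstar).
- exact: ltW (hlt j0 hj0).
- lra.
- exact: hr.
Qed.
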